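(* Let $m$ be a positive integer. For $r\ge 0$ let $f_r=[\psi_1,\psi_1^*]\cdots[\psi_r,\psi_r^*]\in\mathrm{Cl}_q(nm,k)$ (so $f_0=1$), where $[A,B]=AB-BA$. Let $\phi_a$ denote either $\psi_a$ or $\psi_a^*$. There is a map $\Gamma_q\colon \mathrm{Cl}_q(n,k)^{\otimes m}\to \mathrm{Cl}_q(nm,k)$ (ordinary tensor product of algebras over $\mathbb{k}$) determined by \[ 1\otimes\cdots\otimes\phi_a\otimes\cdots\otimes 1\mapsto f_{(j-1)n}\,\phi_{a+(j-1)n},\qquad 1\otimes\cdots\otimes\omega_a\otimes\cdots\otimes1\mapsto \omega_{a+(j-1)n}, \] where on the left $\phi_a$, resp. $\omega_a$, sits in the $j$th tensor factor ($1\le j\le m$, $1\le a\le n$), and it is an isomorphism of $\mathbb{Z}^{nm}$-graded algebras. Its inverse $\Gamma_q^{-1}\colon \mathrm{Cl}_q(nm,k)\to\mathrm{Cl}_q(n,k)^{\otimes m}$ is given by \[ \phi_{a+(j-1)n}\mapsto f_n\otimes\cdots\otimes f_n\otimes\phi_a\otimes1\otimes\cdots\otimes1,\qquad \omega_{a+(j-1)n}\mapsto 1\otimes\cdots\otimes\omega_a\otimes\cdots\otimes 1, \] where $\phi_a$, resp. $\omega_a$, is in the $j$th factor (and $f_n\in\mathrm{Cl}_q(n,k)$ occupies the first $j-1$ factors). In particular, $\Gamma_q(1\otimes\cdots\otimes\phi_a\phi_b\otimes\cdots\otimes1)=\phi_{a+(j-1)n}\phi_{b+(j-1)n}$ when $\phi_a\phi_b$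 is in the $j$th factor.
   Context: Let $\mathbb{k}$ be a field of characteristic different from $2$, let $q\in\mathbb{k}^\times$, and let $N,k$ be positive integers. The quantum Clifford algebra $\mathrm{Cl}_q(N,k)$ is the unital associative $\mathbb{k}$-algebra generated by $\psi_a,\psi_a^*,\omega_a,\omega_a^{-1}$ for $a\in\{1,\dots,N\}$, subject to the relations (for all $a,b\in\{1,\dots,N\}$): $\omega_a\omega_b=\omega_b\omega_a$; $\omega_a\omega_a^{-1}=1$; $\omega_a\psi_b=q^{\delta_{ab}}\psi_b\omega_a$; $\omega_a\psi_b^*=q^{-\delta_{ab}}\psi_b^*\omega_a$; $\psi_a\psi_b+\psi_b\psi_a=0$; $\psi_a^*\psi_b^*+\psi_b^*\psi_a^*=0$; $\psi_a\psi_a^*+q^k\psi_a^*\psi_a=\omega_a^{-k}$; $\psi_a\psi_a^*+q^{-k}\psi_a^*\psi_a=\omega_a^{k}$; and $\psi_a\psi_b^*+\psi_b^*\psi_a=0$ if $a\neq b$. It carries a $\mathbb{Z}^N$-grading with $\deg\psi_a=e_a$, $\deg\psi_a^*=-e_a$, $\deg\omega_a=0$ ($e_a$ the standard basis vector). The theorem uses $N=n$ and $N=nm$; $\mathrm{Cl}_q(n,k)^{\otimes m}$ is $\mathbb{Z}^{nm}$-graded by letting the $j$th factor's degree $e_a$ correspond to $e_{a+(j-1)n}$. *)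

(* Defs.v *)
From HB Require Import structures.
From mathcomp Require Import all_boot all_order all_algebra.
From mathcomp Require Import zify.
Set Implicit Arguments. Unset Strict Implicit. Unset Printing Implicit Defensive.
Import Order.TTheory GRing.Theory Num.Theory.
Local Open Scope ring_scope.

(* Indices a in {1..N} of the paper are represented 0-based by 'I_N. *)

Section Clq.
Variables (F : fieldType) (q : F) (N k : nat) (A : algType F).

Definition Clq_rel (psi psis om omi : 'I_N -> A) : Prop :=
  forall a b : 'I_N,
  om a * om b = om b * om a /\
  om a * omi a = 1 /\
  om a * psi b = q ^+ (a == b) *: (psi b * om a) /\
  om a * psis b = q ^- (a == b) *: (psis b * om a) /\
  psi a * psi b + psi b * psi a = 0 /\
  psis a * psis b + psis b * psis a = 0 /\
  psi a * psis a + q ^+ k *: (psis a * psi a) = omi a ^+ k /\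
  psi a * psis a + q ^- k *: (psis a * psi a) = om a ^+ k /\
  (a != b -> psi a * psis b + psis b * psi a = 0).

Definition clq_phi (psi psis : 'I_N -> A) (s : bool) (a : 'I_N) : A :=
  if s then psi a else psis a.

Definition fcomm (psi psis : 'I_N -> A) (r : nat) : A :=
  \prod_(i < N | (i < r)%N) (psi i * psis i - psis i * psi i).

Inductive clq_gen := Psi of 'I_N | Psis of 'I_N | Om of 'I_N | Omi of 'I_N.

Definition clq_ev (psi psis om omi : 'I_N -> A) (g : clq_gen) : A :=
  match g with Psi a => psi a | Psis a => psis a | Om a => om a | Omi a => omi a end.

End Clq.

Definition evec (N : nat) (a : 'I_N) : {ffun 'I_N -> int} := [ffun i => ((i == a) : nat)%:Z].

Definition clq_deg (N : nat) (g : clq_gen N) : {ffun 'I_N -> int} :=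
  match g with
  | Psi a => evec a | Psis a => - evec a | Om _ => 0 | Omi _ => 0 end.

Definition is_Clq (F : fieldType) (q : F) (N k : nat) (A : algType F)
    (psi psis om omi : 'I_N -> A) : Prop :=
  Clq_rel q k psi psis om omi /\
  forall (B : algType F) (psi' psis' om' omi' : 'I_N -> B),
    Clq_rel q k psi' psis' om' omi' ->
    exists f : {lrmorphism A -> B},
      (forall a, [/\ f (psi a) = psi' a, f (psis a) = psis' a,
                     f (om a) = om' a & f (omi a) = omi' a]) /\
      (forall g : {lrmorphism A -> B},
         (forall a, [/\ g (psi a) = psi' a, g (psis a) = psis' a,
                        g (om a) = om' a & g (omi a) = omi' a]) -> g =1 f).

(* T together with iota_1..iota_m is the m-fold tensor power A^{(x) m} of the
   F-algebra A (universal property of the tensor product of algebras: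
   pairwise commuting images). *)
Definition is_tensor_power (F : fieldType) (m : nat) (A T : algType F)
    (iota : 'I_m -> {lrmorphism A -> T}) : Prop :=
  (forall i j : 'I_m, i != j -> forall x y, iota i x * iota j y = iota j y * iota i x) /\
  forall (B : algType F) (g : 'I_m -> {lrmorphism A -> B}),
    (forall i j : 'I_m, i != j -> forall x y, g i x * g j y = g j y * g i x) ->
    exists h : {lrmorphism T -> B},
      (forall i x, h (iota i x) = g i x) /\
      (forall h' : {lrmorphism T -> B}, (forall i x, h' (iota i x) = g i x) -> h' =1 h).

(* Homogeneous elements of degree d: F-linear combinations of words in the
   generators ev whose total degree is d. *)
Definition homog (F : fieldType) (A : algType F) (G : Type) (D : zmodType)
    (ev : G -> A) (deg : G -> D) (d : D) (x : A) : Prop :=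
  exists s : seq (F * seq G),
    x = \sum_(p <- s) p.1 *: \prod_(g <- p.2) ev g /\
    (forall p, List.In p s -> \sum_(g <- p.2) deg g = d).

(* index a + (j-1) n (0-based: j*n + a) in {0..mn-1} *)
Lemma blk_proof (n m : nat) (j : 'I_m) (a : 'I_n) : (j * n + a < m * n)%N.
Proof. have := ltn_ord j; have := ltn_ord a; nia. Qed.

Definition blk (n m : nat) (j : 'I_m) (a : 'I_n) : 'I_(m * n) := Ordinal (blk_proof j a).

Definition clq_shift (n m : nat) (j : 'I_m) (g : clq_gen n) : clq_gen (m * n) :=
  match g with
  | Psi a => Psi (blk j a) | Psis a => Psis (blk j a)
  | Om a => Om (blk j a) | Omi a => Omi (blk j a) end.

(* Z^{nm}-grading of Cl_q(n,k)^{(x) m}: generators iota_j(g), with the j-th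
   factor's e_a corresponding to e_{a+(j-1)n}. *)
Definition tensor_ev (F : fieldType) (n m : nat) (A T : algType F)
    (iota : 'I_m -> {lrmorphism A -> T}) (psi psis om omi : 'I_n -> A)
    (p : 'I_m * clq_gen n) : T := iota p.1 (clq_ev psi psis om omi p.2).

Definition tensor_deg (n m : nat) (p : 'I_m * clq_gen n) : {ffun 'I_(m * n) -> int} :=
  clq_deg (clq_shift p.1 p.2).

Definition Gamma_spec (F : fieldType) (n m : nat) (A T B : algType F)
    (iota : 'I_m -> {lrmorphism A -> T})
    (psiA psisA omA omiA : 'I_n -> A) (psiB psisB omB omiB : 'I_(m * n) -> B)
    (g : T -> B) : Prop :=
  (forall (j : 'I_m) (a : 'I_n) (s : bool),
      g (iota j (clq_phi psiA psisA s a)) = fcomm psiB psisB (j * n) * clq_phi psiB psisB s (blk j a)) /\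
  (forall (j : 'I_m) (a : 'I_n), g (iota j (omA a)) = omB (blk j a)).

(* Main.v *)
Require Import Defs.
From HB Require Import structures.
From mathcomp Require Import all_boot all_order all_algebra.
From mathcomp Require Import zify.
From Stdlib Require Import IndefiniteDescription.
Import Order.TTheory GRing.Theory Num.Theory.
Local Open Scope ring_scope.
Set Implicit Arguments. Unset Strict Implicit.

Section MkLRM.
Variables (F : fieldType) (A B : algType F) (f : A -> B).
Hypotheses (fB : forall x y, f (x - y) = f x - f y) (fM : forall x y, f (x*y) = f x * f y)
  (f1 : f 1 = 1) (fZ : forall (c:F) x, f (c *: x) = c *: f x).
Definition mkf x := f x.
HB.instance Definition _ := GRing.isZmodMorphism.Build A B mkf fB.
HB.instance Definition _ := GRing.isMonoidMorphism.Build A B mkf (f1, fM).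
HB.instance Definition _ := GRing.isScalable.Build F A B *:%R mkf fZ.
Definition mklrm : {lrmorphism A -> B} := mkf.
Lemma mklrmE x : mklrm x = f x. Proof. by []. Qed.
End MkLRM.

Section Cent.
Variables (F : fieldType) (B : algType F) (w : B).
Definition centp : {pred B} := fun x => w * x == x * w.
Lemma centp_closed : subalg_closed centp.
Proof.
split; first by rewrite /centp unfold_in /= mulr1 mul1r.
- move=> a u v; rewrite !unfold_in /= => /eqP hu /eqP hv.
  by rewrite mulrDr mulrDl -scalerAr hu scalerAl hv.
- move=> u v; rewrite !unfold_in /= => /eqP hu /eqP hv.
  by rewrite mulrA hu -mulrA hv mulrA.
Qed.
HB.instance Definition _ := GRing.isSubalgClosed.Build F B centp centp_closed.
Record cent := Cent { cval :> B; _ : centp cval }.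
HB.instance Definition _ := [isSub for cval].
HB.instance Definition _ := [Choice of cent by <:].
HB.instance Definition _ := [SubChoice_isSubAlgebra of cent by <:].
Definition cvalr : {rmorphism cent -> B} := (val : cent -> B).
Definition cvall : {linear cent -> B} := (val : cent -> B).
Lemma cvB (x y : cent) : val (x - y) = val x - val y. Proof. exact: (rmorphB cvalr). Qed.
Lemma cvM (x y : cent) : val (x * y) = val x * val y. Proof. exact: (rmorphM cvalr). Qed.
Lemma cv1 : val (1 : cent) = 1. Proof. exact: (rmorph1 cvalr). Qed.
Lemma cvZ (c : F) (x : cent) : val (c *: x) = c *: val x. Proof. by rewrite linearZ. Qed.
Definition cvalm : {lrmorphism cent -> B} := @mklrm F cent B (val : cent -> B) cvB cvM cv1 cvZ.
Lemma cvalmE x : cvalm x = val x. Proof. by []. Qed.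
Lemma cval_comm (x : cent) : w * val x = val x * w.
Proof. by case: x => /= x /eqP. Qed.
End Cent.

Section RingLemmas.
Variables (F : fieldType) (R : algType F).
Implicit Types (x y z w u v : R).

Lemma anti_of x y : x * y + y * x = 0 -> x * y = - (y * x).
Proof. by move/eqP; rewrite addr_eq0 => /eqP. Qed.

Lemma sq0_of (h2 : (2:F) != 0) x : x * x + x * x = 0 -> x * x = 0.
Proof.
move=> H; have H2 : (2:F) *: (x * x) = 0 by rewrite scaler_nat mulr2n.
by rewrite -[x * x]scale1r -(mulVf h2) -scalerA H2 scaler0.
Qed.

Lemma expand2 u v (a b : F) : u * v = 0 -> v * u = 0 ->
  (u + a *: v) * (u + b *: v) = u * u + (a * b) *: (v * v).
Proof.
move=> uv vu; rewrite mulrDl !mulrDr -!scalerAl -!scalerAr uv vu !scaler0 addr0 add0r.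
by rewrite scalerA mulrC.
Qed.

Lemma expr_inv x y n : x * y = 1 -> x ^+ n * y ^+ n = 1.
Proof.
move=> xy; elim: n => [|n IH]; first by rewrite !expr0 mulr1.
by rewrite exprSr exprS mulrA -(mulrA _ x y) xy mulr1 IH.
Qed.

Lemma anti_c1 x y : x * x = 0 -> x * (x * y - y * x) = - ((x * y - y * x) * x).
Proof.
move=> xx; rewrite mulrBr mulrBl !mulrA xx mul0r sub0r.
by rewrite -(mulrA y x x) xx mulr0 subr0.
Qed.

Lemma anti_c2 x y : y * y = 0 -> y * (x * y - y * x) = - ((x * y - y * x) * y).
Proof.
move=> yy; rewrite mulrBr mulrBl !mulrA yy mul0r subr0.
by rewrite -(mulrA x y y) yy mulr0 sub0r opprK.
Qed.
End RingLemmas.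

Section RingLemmas2.
Variables (F : fieldType) (R : algType F).
Implicit Types (x y z w u v : R).

Lemma comm_c w x y : w * x = - (x * w) -> w * y = - (y * w) -> GRing.comm w (x * y - y * x).
Proof.
move=> hx hy; have h : forall a b : R, w * a = - (a * w) -> w * b = - (b * w) ->
   GRing.comm w (a * b).
  by move=> a b ha hb; rewrite /GRing.comm (mulrA w a b) ha mulNr -(mulrA a w b) hb mulrN opprK mulrA.
by apply: commrB; apply: h.
Qed.

Lemma comm_scal w x y (s t : F) : w * x = s *: (x * w) -> w * y = t *: (y * w) ->
  s * t = 1 -> GRing.comm w (x * y - y * x).
Proof.
move=> hx hy st; apply: commrB; rewrite /GRing.comm.
- by rewrite mulrA hx -scalerAl -mulrA hy scalerAr scalerA st scale1r mulrA.
- by rewrite mulrA hy -scalerAl -mulrA hx scalerAr scalerA mulrC st scale1r mulrA.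
Qed.

Lemma comm_inv w z x : w * z = 1 -> z * w = 1 -> GRing.comm w x -> GRing.comm z x.
Proof.
move=> wz zw hx; rewrite /GRing.comm.
by rewrite -[z * x]mulr1 -wz mulrA -(mulrA z x w) -hx mulrA zw mul1r.
Qed.

Lemma prod_invol (I : Type) (s : seq I) (P : pred I) (G : I -> R) :
  (forall i j, GRing.comm (G i) (G j)) -> (forall i, G i * G i = 1) ->
  (\prod_(i <- s | P i) G i) * (\prod_(i <- s | P i) G i) = 1.
Proof.
move=> hc hs; elim: s => [|i s IH]; first by rewrite big_nil mulr1.
rewrite big_cons; case: ifP => // Pi.
have hq : GRing.comm (G i) (\prod_(j <- s | P j) G j) by apply: commr_prod => j _; apply: hc.
by rewrite mulrA -(mulrA (G i)) -hq mulrA hs mul1r IH.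
Qed.

Lemma prod_sign (I : Type) (s : seq I) (P : pred I) (G : I -> R) (x : R) (e : I -> F) :
  (forall i, P i -> x * G i = e i *: (G i * x)) ->
  x * \prod_(i <- s | P i) G i = (\prod_(i <- s | P i) e i) *: (\prod_(i <- s | P i) G i * x).
Proof.
move=> he; elim: s => [|i s IH]; first by rewrite !big_nil mulr1 mul1r scale1r.
rewrite !big_cons; case: ifP => // Pi.
rewrite mulrA he // -scalerAl -(mulrA (G i) x) IH -scalerAr scalerA.
by rewrite mulrA.
Qed.

Lemma twist_mul Fx x y : Fx * Fx = 1 -> GRing.comm Fx x -> (Fx * x) * (Fx * y) = x * y.
Proof. by move=> hsq hx; rewrite mulrA -(mulrA Fx x Fx) -hx mulrA hsq mul1r. Qed.

Lemma anti_block P1 P2 x y : x * P2 = - (P2 * x) -> y * P1 = P1 * y ->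
  P1 * P2 = P2 * P1 -> x * y = - (y * x) -> (P1 * x) * (P2 * y) = (P2 * y) * (P1 * x).
Proof.
move=> hx hy hp hxy.
have L : (P1 * x) * (P2 * y) = - (P1 * P2 * (x * y)).
  by rewrite -(mulrA P1 x) (mulrA x P2 y) hx mulNr mulrN !mulrA.
have R' : (P2 * y) * (P1 * x) = P1 * P2 * (y * x).
  by rewrite -(mulrA P2 y) (mulrA y P1 x) hy !mulrA -hp.
by rewrite L R' hxy mulrN opprK.
Qed.

Lemma anti_block2 P1 P2 x y : x * P2 = - (P2 * x) -> y * P1 = P1 * y ->
  P1 * P2 = P2 * P1 -> x * y = y * x -> (P1 * x) * (P2 * y) = - ((P2 * y) * (P1 * x)).
Proof.
move=> hx hy hp hxy.
have L : (P1 * x) * (P2 * y) = - (P1 * P2 * (x * y)).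
  by rewrite -(mulrA P1 x) (mulrA x P2 y) hx mulNr mulrN !mulrA.
have R' : (P2 * y) * (P1 * x) = P1 * P2 * (y * x).
  by rewrite -(mulrA P2 y) (mulrA y P1 x) hy !mulrA -hp.
by rewrite L R' hxy.
Qed.
End RingLemmas2.

Section ClqFacts.
Variables (F : fieldType) (q : F) (k N : nat) (A : algType F) (psi psis om omi : 'I_N -> A).
Hypothesis hrel : Clq_rel q k psi psis om omi.
Hypotheses (h2 : (2:F) != 0) (hq : q != 0) (hk : (0 < k)%N).

Lemma r_omom a b : om a * om b = om b * om a. Proof. by case: (hrel a b). Qed.
Lemma r_omomi a : om a * omi a = 1. Proof. by case: (hrel a a) => _ []. Qed.
Lemma r_ompsi a b : om a * psi b = q ^+ (a == b) *: (psi b * om a).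
Proof. by case: (hrel a b) => _ [_ []]. Qed.
Lemma r_ompsis a b : om a * psis b = q ^- (a == b) *: (psis b * om a).
Proof. by case: (hrel a b) => _ [_ [_ []]]. Qed.
Lemma r_psipsi a b : psi a * psi b + psi b * psi a = 0.
Proof. by case: (hrel a b) => _ [_ [_ [_ []]]]. Qed.
Lemma r_psispsis a b : psis a * psis b + psis b * psis a = 0.
Proof. by case: (hrel a b) => _ [_ [_ [_ [_ []]]]]. Qed.
Lemma r_main1 a : psi a * psis a + q ^+ k *: (psis a * psi a) = omi a ^+ k.
Proof. by case: (hrel a a) => _ [_ [_ [_ [_ [_ []]]]]]. Qed.
Lemma r_main2 a : psi a * psis a + q ^- k *: (psis a * psi a) = om a ^+ k.
Proof. by case: (hrel a a) => _ [_ [_ [_ [_ [_ [_ []]]]]]]. Qed.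
Lemma r_mixed a b : a != b -> psi a * psis b + psis b * psi a = 0.
Proof. by case: (hrel a b) => _ [_ [_ [_ [_ [_ [_ [_ ]]]]]]]. Qed.

Lemma psi2 a : psi a * psi a = 0. Proof. exact/sq0_of/r_psipsi. Qed.
Lemma psis2 a : psis a * psis a = 0. Proof. exact/sq0_of/r_psispsis. Qed.

Definition cc a := psi a * psis a - psis a * psi a.

Lemma uv0 a : (psi a * psis a) * (psis a * psi a) = 0.
Proof. by rewrite mulrA -(mulrA (psi a) (psis a) (psis a)) psis2 mulr0 mul0r. Qed.
Lemma vu0 a : (psis a * psi a) * (psi a * psis a) = 0.
Proof. by rewrite mulrA -(mulrA (psis a) (psi a) (psi a)) psi2 mulr0 mul0r. Qed.

Lemma qk1 : q ^- k * q ^+ k = 1.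
Proof. by rewrite mulVf // expf_neq0. Qed.
Lemma qk2 : q ^+ k * q ^- k = 1.
Proof. by rewrite mulfV // expf_neq0. Qed.

Lemma uuvv a : (psi a * psis a) * (psi a * psis a) + (psis a * psi a) * (psis a * psi a) = 1.
Proof.
have := expr_inv k (r_omomi a); rewrite -r_main2 -r_main1 expand2 ?uv0 ?vu0 //.
by rewrite qk1 scale1r.
Qed.

Lemma omiK a : omi a * om a = 1.
Proof.
have H : omi a ^+ k * om a ^+ k = 1.
  by rewrite -r_main2 -r_main1 expand2 ?uv0 ?vu0 // qk2 scale1r uuvv.
move: H; case: k hk => // k' _; rewrite (exprSr (om a)) mulrA => H.
have -> : omi a = omi a ^+ k'.+1 * om a ^+ k'.
  by rewrite -[RHS]mulr1 -(r_omomi a) mulrA H mul1r.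
by [].
Qed.

Lemma cc_sq a : cc a * cc a = 1.
Proof. by rewrite /cc mulrBl !mulrBr uv0 vu0 subr0 sub0r opprK uuvv. Qed.

Lemma psi_cc a : psi a * cc a = - (cc a * psi a). Proof. exact/anti_c1/psi2. Qed.
Lemma psis_cc a : psis a * cc a = - (cc a * psis a). Proof. exact/anti_c2/psis2. Qed.

Lemma psi_anti a b : psi a * psi b = - (psi b * psi a). Proof. exact/anti_of/r_psipsi. Qed.
Lemma psis_anti a b : psis a * psis b = - (psis b * psis a). Proof. exact/anti_of/r_psispsis. Qed.
Lemma psi_psis_anti a b : a != b -> psi a * psis b = - (psis b * psi a).
Proof. by move=> ab; apply/anti_of/r_mixed. Qed.
Lemma psis_psi_anti a b : a != b -> psis b * psi a = - (psi a * psis b).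
Proof. by move=> ab; apply/anti_of; rewrite addrC; apply/r_mixed. Qed.

Lemma cc_psi a b : a != b -> GRing.comm (psi b) (cc a).
Proof.
move=> ab; apply: comm_c; first exact: psi_anti.
by apply: psi_psis_anti; rewrite eq_sym.
Qed.
Lemma cc_psis a b : a != b -> GRing.comm (psis b) (cc a).
Proof.
move=> ab; apply: comm_c; last exact: psis_anti.
exact: psis_psi_anti.
Qed.
Lemma cc_om a b : GRing.comm (om b) (cc a).
Proof.
apply: (comm_scal (r_ompsi b a) (r_ompsis b a)).
by rewrite mulfV // expf_neq0.
Qed.
Lemma cc_omi a b : GRing.comm (omi b) (cc a).
Proof. exact: (comm_inv (r_omomi b) (omiK b) (cc_om a b)). Qed.
Lemma cc_cc a b : GRing.comm (cc a) (cc b).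
Proof.
case: (eqVneq a b) => [->|ab]; first exact: commr_refl.
apply: commrB; apply: commrM; apply: commr_sym;
  [exact: cc_psi | exact: cc_psis | exact: cc_psis | exact: cc_psi].
Qed.
Lemma om_omi a b : GRing.comm (om a) (omi b).
Proof.
apply: commr_sym; apply: (comm_inv (r_omomi b) (omiK b)); exact: r_omom.
Qed.
Lemma omi_omi a b : GRing.comm (omi a) (omi b).
Proof.
apply: (comm_inv (r_omomi a) (omiK a)); apply: om_omi.
Qed.
Lemma om_psi_ne a b : a != b -> GRing.comm (om a) (psi b).
Proof. by move=> ab; rewrite /GRing.comm r_ompsi (negbTE ab) expr0 scale1r. Qed.
Lemma om_psis_ne a b : a != b -> GRing.comm (om a) (psis b).
Proof. by move=> ab; rewrite /GRing.comm r_ompsis (negbTE ab) expr0 invr1 scale1r. Qed.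
Lemma omi_psi_ne a b : a != b -> GRing.comm (omi a) (psi b).
Proof. by move=> ab; apply: (comm_inv (r_omomi a) (omiK a)); apply: om_psi_ne. Qed.
Lemma omi_psis_ne a b : a != b -> GRing.comm (omi a) (psis b).
Proof. by move=> ab; apply: (comm_inv (r_omomi a) (omiK a)); apply: om_psis_ne. Qed.

Lemma fcommE r : fcomm psi psis r = \prod_(i < N | (i < r)%N) cc i. Proof. by []. Qed.
Lemma fc_sq r : fcomm psi psis r * fcomm psi psis r = 1.
Proof. by rewrite fcommE; apply: prod_invol; [exact: cc_cc | exact: cc_sq]. Qed.
Lemma fc_psi r (b : 'I_N) : (r <= b)%N -> GRing.comm (psi b) (fcomm psi psis r).
Proof.
move=> rb; apply: commr_prod => i ir; apply: cc_psi.
by apply/eqP => ib; move: ir; rewrite ib ltnNge rb.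
Qed.
Lemma fc_psis r (b : 'I_N) : (r <= b)%N -> GRing.comm (psis b) (fcomm psi psis r).
Proof.
move=> rb; apply: commr_prod => i ir; apply: cc_psis.
by apply/eqP => ib; move: ir; rewrite ib ltnNge rb.
Qed.
Lemma fc_om r b : GRing.comm (om b) (fcomm psi psis r).
Proof. by apply: commr_prod => i _; apply: cc_om. Qed.
Lemma fc_omi r b : GRing.comm (omi b) (fcomm psi psis r).
Proof. by apply: commr_prod => i _; apply: cc_omi. Qed.
Lemma fc_fc r s : GRing.comm (fcomm psi psis r) (fcomm psi psis s).
Proof. by apply: commr_prod => i _; apply: commr_sym; apply: commr_prod => j _; apply: cc_cc. Qed.

Lemma sign_prod (b : 'I_N) r : (b < r)%N ->
  \prod_(i < N | (i < r)%N) (if i == b then -1 else 1 : F) = -1.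
Proof.
move=> br; rewrite (bigD1 b) //= eqxx big1 ?mulr1 // => i /andP [_ ib].
by rewrite (negbTE ib).
Qed.

Lemma fc_psi_anti r (b : 'I_N) : (b < r)%N -> psi b * fcomm psi psis r = - (fcomm psi psis r * psi b).
Proof.
move=> br; have he : forall i : 'I_N, (i < r)%N ->
    psi b * cc i = (if i == b then -1 else 1 : F) *: (cc i * psi b).
  move=> i _; case: (eqVneq i b) => [->|ib]; first by rewrite psi_cc scaleN1r.
  by rewrite scale1r; apply: cc_psi.
by rewrite fcommE (prod_sign _ he) sign_prod // scaleN1r.
Qed.
Lemma fc_psis_anti r (b : 'I_N) : (b < r)%N -> psis b * fcomm psi psis r = - (fcomm psi psis r * psis b).
Proof.
move=> br; have he : forall i : 'I_N, (i < r)%N ->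
    psis b * cc i = (if i == b then -1 else 1 : F) *: (cc i * psis b).
  move=> i _; case: (eqVneq i b) => [->|ib]; first by rewrite psis_cc scaleN1r.
  by rewrite scale1r; apply: cc_psis.
by rewrite fcommE (prod_sign _ he) sign_prod // scaleN1r.
Qed.

Lemma phi2 s a : clq_phi psi psis s a * clq_phi psi psis s a = 0.
Proof. by case: s; [exact: psi2 | exact: psis2]. Qed.
Lemma phi_anti s t a b : a != b ->
  clq_phi psi psis s a * clq_phi psi psis t b = - (clq_phi psi psis t b * clq_phi psi psis s a).
Proof.
move=> ab; case: s; case: t => /=.
- exact: psi_anti.
- exact: psi_psis_anti.
- by apply: psis_psi_anti; rewrite eq_sym.
- exact: psis_anti.
Qed.
Lemma fc_phi r s (b : 'I_N) : (r <= b)%N -> GRing.comm (clq_phi psi psis s b) (fcomm psi psis r).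
Proof. by case: s => /= rb; [apply: fc_psi | apply: fc_psis]. Qed.
Lemma fc_phi_anti r s (b : 'I_N) : (b < r)%N ->
  clq_phi psi psis s b * fcomm psi psis r = - (fcomm psi psis r * clq_phi psi psis s b).
Proof. by case: s => /= rb; [apply: fc_psi_anti | apply: fc_psis_anti]. Qed.
Lemma om_phi_ne s a b : a != b -> GRing.comm (om a) (clq_phi psi psis s b).
Proof. by case: s => /= ab; [apply: om_psi_ne | apply: om_psis_ne]. Qed.
Lemma omi_phi_ne s a b : a != b -> GRing.comm (omi a) (clq_phi psi psis s b).
Proof. by case: s => /= ab; [apply: omi_psi_ne | apply: omi_psis_ne]. Qed.
End ClqFacts.

Section LRHelpers.
Variables (F : fieldType) (A B : algType F) (h : {lrmorphism A -> B}).
Lemma lrD x y : h (x + y) = h x + h y. Proof. exact: rmorphD. Qed.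
Lemma lrB x y : h (x - y) = h x - h y. Proof. exact: rmorphB. Qed.
Lemma lrN x : h (- x) = - h x. Proof. exact: rmorphN. Qed.
Lemma lrM x y : h (x * y) = h x * h y. Proof. exact: rmorphM. Qed.
Lemma lrZ (c : F) x : h (c *: x) = c *: h x. Proof. exact: linearZ. Qed.
Lemma lrX x n : h (x ^+ n) = h x ^+ n. Proof. exact: rmorphXn. Qed.
Lemma lr1 : h 1 = 1. Proof. exact: rmorph1. Qed.
Lemma lr0 : h 0 = 0. Proof. exact: rmorph0. Qed.
Lemma lrP (I : Type) (r : seq I) (P : pred I) (G : I -> A) :
  h (\prod_(i <- r | P i) G i) = \prod_(i <- r | P i) h (G i).
Proof. exact: rmorph_prod. Qed.
Lemma lrS (I : Type) (r : seq I) (P : pred I) (G : I -> A) :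
  h (\sum_(i <- r | P i) G i) = \sum_(i <- r | P i) h (G i).
Proof. exact: linear_sum. Qed.
End LRHelpers.

Section RelTransport.
Variables (F : fieldType) (q : F) (k : nat).

Lemma rel_morph N (A B : algType F) (h : {lrmorphism A -> B}) (psi psis om omi : 'I_N -> A) :
  Clq_rel q k psi psis om omi ->
  Clq_rel q k (fun a => h (psi a)) (fun a => h (psis a)) (fun a => h (om a)) (fun a => h (omi a)).
Proof.
move=> H a b; have [e1 [e2 [e3 [e4 [e5 [e6 [e7 [e8 e9]]]]]]]] := H a b.
have T : forall x y : A, x = y -> h x = h y by move=> x y ->.
do 8! (split; first by move: (T _ _ e1) (T _ _ e2) (T _ _ e3) (T _ _ e4) (T _ _ e5) (T _ _ e6) (T _ _ e7) (T _ _ e8);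
  rewrite ?lrD ?lrZ ?lrM ?lr1 ?lr0 ?lrX; intros; assumption).
by move=> ab; move: (T _ _ (e9 ab)); rewrite ?lrD ?lrM ?lr0.
Qed.

Lemma rel_inj N (A B : algType F) (h : {lrmorphism A -> B}) (psi psis om omi : 'I_N -> A) :
  injective h ->
  Clq_rel q k (fun a => h (psi a)) (fun a => h (psis a)) (fun a => h (om a)) (fun a => h (omi a)) ->
  Clq_rel q k psi psis om omi.
Proof.
move=> hi H a b; have [e1 [e2 [e3 [e4 [e5 [e6 [e7 [e8 e9]]]]]]]] := H a b.
split; first by apply: hi; rewrite !lrM e1.
split; first by apply: hi; rewrite !lrM e2 lr1.
split; first by apply: hi; rewrite !lrM e3 lrZ lrM.
split; first by apply: hi; rewrite !lrM e4 lrZ lrM.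
split; first by apply: hi; rewrite lrD !lrM e5 lr0.
split; first by apply: hi; rewrite lrD !lrM e6 lr0.
split; first by apply: hi; rewrite lrD lrZ !lrM e7 lrX.
split; first by apply: hi; rewrite lrD lrZ !lrM e8 lrX.
by move=> ab; apply: hi; rewrite lrD !lrM e9 // lr0.
Qed.

Lemma rel_comp N N' (A : algType F) (psi psis om omi : 'I_N -> A) (sg : 'I_N' -> 'I_N) :
  injective sg -> Clq_rel q k psi psis om omi ->
  Clq_rel q k (fun a => psi (sg a)) (fun a => psis (sg a)) (fun a => om (sg a)) (fun a => omi (sg a)).
Proof.
move=> hi H a b; have := H (sg a) (sg b); rewrite (inj_eq hi).
move=> [e1 [e2 [e3 [e4 [e5 [e6 [e7 [e8 e9]]]]]]]].
do 8! (split => //); move=> ab; apply: e9; by rewrite (inj_eq hi).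
Qed.

Lemma rel_twist N (A : algType F) (psi psis om omi : 'I_N -> A) (Fx : A) :
  Clq_rel q k psi psis om omi -> Fx * Fx = 1 ->
  (forall a, GRing.comm Fx (psi a)) -> (forall a, GRing.comm Fx (psis a)) ->
  (forall a, GRing.comm Fx (om a)) ->
  Clq_rel q k (fun a => Fx * psi a) (fun a => Fx * psis a) om omi.
Proof.
move=> H hsq hp hps ho a b; have [e1 [e2 [e3 [e4 [e5 [e6 [e7 [e8 e9]]]]]]]] := H a b.
rewrite !twist_mul //.
split => //; split => //.
split; first by rewrite mulrA -ho -(mulrA Fx (om a)) e3 -scalerAr mulrA.
split; first by rewrite mulrA -ho -(mulrA Fx (om a)) e4 -scalerAr mulrA.
do 4! (split => //).
Qed.
End RelTransport.

Section Universal.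
Variables (F : fieldType) (q : F) (k N : nat) (A : algType F) (psi psis om omi : 'I_N -> A).
Hypothesis hA : is_Clq q k psi psis om omi.

Lemma clq_uniq (B : algType F) (h1 h2 : {lrmorphism A -> B}) :
  (forall a, h1 (psi a) = h2 (psi a)) -> (forall a, h1 (psis a) = h2 (psis a)) ->
  (forall a, h1 (om a) = h2 (om a)) -> (forall a, h1 (omi a) = h2 (omi a)) ->
  h1 =1 h2.
Proof.
move=> e1 e2 e3 e4.
have [f [_ uq]] := hA.2 B _ _ _ _ (rel_morph h2 hA.1).
move=> x; rewrite (uq h1 _ x); last by move=> a; split.
by rewrite (uq h2 _ x).
Qed.

Lemma clq_ex (B : algType F) (psi' psis' om' omi' : 'I_N -> B) :
  Clq_rel q k psi' psis' om' omi' ->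
  {f : {lrmorphism A -> B} | forall a, [/\ f (psi a) = psi' a, f (psis a) = psis' a,
                     f (om a) = om' a & f (omi a) = omi' a]}.
Proof.
move=> H; apply: constructive_indefinite_description.
by have [f [hf _]] := hA.2 B _ _ _ _ H; exists f.
Qed.

Lemma clq_cent (B : algType F) (h : {lrmorphism A -> B}) (w : B) :
  (forall a, GRing.comm w (h (psi a))) -> (forall a, GRing.comm w (h (psis a))) ->
  (forall a, GRing.comm w (h (om a))) -> (forall a, GRing.comm w (h (omi a))) ->
  forall x, GRing.comm w (h x).
Proof.
move=> c1 c2 c3 c4.
pose mk (x : B) (hx : GRing.comm w x) : cent w := @Cent F B w x (introT eqP hx).
have Hrel : Clq_rel q k (fun a => mk _ (c1 a)) (fun a => mk _ (c2 a))
                        (fun a => mk _ (c3 a)) (fun a => mk _ (c4 a)).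
  apply: (rel_inj (h := cvalm w)); first exact: val_inj.
  exact: (rel_morph h hA.1).
have [f hf] := clq_ex Hrel.
have E : (cvalm w \o f : {lrmorphism A -> B}) =1 h.
  by apply: clq_uniq => a /=; rewrite cvalmE; case: (hf a) => e1 e2 e3 e4; rewrite ?e1 ?e2 ?e3 ?e4.
move=> x; rewrite -(E x) /= cvalmE; exact: cval_comm.
Qed.
End Universal.

Lemma tens_uniq (F : fieldType) (m : nat) (A T : algType F) (iota : 'I_m -> {lrmorphism A -> T})
  (hT : is_tensor_power iota) (B : algType F) (h1 h2 : {lrmorphism T -> B}) :
  (forall i x, h1 (iota i x) = h2 (iota i x)) -> h1 =1 h2.
Proof.
move=> e.
have hc : forall i j : 'I_m, i != j -> forall x y,
    (h2 \o iota i) x * (h2 \o iota j) y = (h2 \o iota j) y * (h2 \o iota i) x.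
  by move=> i j ij x y /=; rewrite -!lrM hT.1.
have [h [_ uq]] := hT.2 B (fun i => (h2 \o iota i : {lrmorphism A -> B})) hc.
move=> x; by rewrite (uq h1 _ x) // (uq h2 _ x).
Qed.

Section Homog.
Variables (F : fieldType) (R : algType F) (G : Type) (D : zmodType) (ev : G -> R) (deg : G -> D).
Notation hg := (homog ev deg).

Lemma homog_word (c : F) (w : seq G) : hg (\sum_(g <- w) deg g) (c *: \prod_(g <- w) ev g).
Proof. by exists [:: (c, w)]; split; [rewrite big_seq1 | move=> p [<-|[]]]. Qed.

Lemma homog0 d : hg d 0.
Proof. by exists [::]; split; [rewrite big_nil | move=> p []]. Qed.

Lemma homogD d x y : hg d x -> hg d y -> hg d (x + y).
Proof.
move=> [s1 [-> H1]] [s2 [-> H2]]; exists (s1 ++ s2); split; first by rewrite big_cat.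
by move=> p hp; case: (List.in_app_or _ _ _ hp) => ?; [apply: H1 | apply: H2].
Qed.

Lemma homog_sum d (I : Type) (r : seq I) (Fi : I -> R) :
  (forall i, List.In i r -> hg d (Fi i)) -> hg d (\sum_(i <- r) Fi i).
Proof.
elim: r => [|i r IH] H; first by rewrite big_nil; apply: homog0.
rewrite big_cons; apply: homogD; first by apply: H; left.
by apply: IH => j hj; apply: H; right.
Qed.

Lemma homogZ d (c : F) x : hg d x -> hg d (c *: x).
Proof.
move=> [s [-> Hs]]; rewrite scaler_sumr; apply: homog_sum => p hp.
by rewrite scalerA -(Hs p hp); apply: homog_word.
Qed.

Lemma homogN d x : hg d x -> hg d (- x).
Proof. by move=> H; rewrite -scaleN1r; apply: homogZ. Qed.

Lemma homogB d x y : hg d x -> hg d y -> hg d (x - y).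
Proof. by move=> hx hy; apply: homogD => //; apply: homogN. Qed.

Lemma homogM d1 d2 x y : hg d1 x -> hg d2 y -> hg (d1 + d2) (x * y).
Proof.
move=> [s1 [-> H1]] [s2 [-> H2]]; rewrite mulr_suml; apply: homog_sum => p hp.
rewrite mulr_sumr; apply: homog_sum => p' hp'.
rewrite -scalerAl -scalerAr scalerA -big_cat -(H1 p hp) -(H2 p' hp') -big_cat.
exact: homog_word.
Qed.

Lemma homog1 : hg 0 1.
Proof. by have := homog_word 1 [::]; rewrite !big_nil scale1r. Qed.

Lemma homog_gen g : hg (deg g) (ev g).
Proof. by have := homog_word 1 [:: g]; rewrite !big_seq1 scale1r. Qed.

Lemma homog_eq d d' x : d = d' -> hg d x -> hg d' x.
Proof. by move=> ->. Qed.

Lemma homog_prod0 (I : Type) (r : seq I) (P : pred I) (Fi : I -> R) :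
  (forall i, P i -> hg 0 (Fi i)) -> hg 0 (\prod_(i <- r | P i) Fi i).
Proof.
move=> H; apply: (big_ind (hg 0)) => //; first exact: homog1.
by move=> x y hx hy; rewrite -[0]addr0; apply: homogM.
Qed.
End Homog.

Lemma homog_morph (F : fieldType) (R R' : algType F) (G G' : Type) (D : zmodType)
  (ev : G -> R) (deg : G -> D) (ev' : G' -> R') (deg' : G' -> D) (h : {lrmorphism R -> R'}) :
  (forall g, homog ev' deg' (deg g) (h (ev g))) ->
  forall d x, homog ev deg d x -> homog ev' deg' d (h x).
Proof.
move=> Hg d x [s [-> Hs]]; rewrite lrS; apply: homog_sum => p hp.
rewrite lrZ lrP; apply: homogZ; rewrite -(Hs p hp).
elim: (p.2) => [|g w IH]; first by rewrite !big_nil; apply: homog1.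
by rewrite !big_cons; apply: homogM.
Qed.

Section Reindex.
Variable (R : pzRingType).

Lemma nat_block (G' : nat -> R) (n j : nat) :
  \prod_(0 <= i < j) \prod_(a < n) G' (i * n + a)%N = \prod_(0 <= b < j * n) G' b.
Proof.
elim: j => [|j IH]; first by rewrite !big_geq.
rewrite big_nat_recr //= IH mulSn addnC [RHS](big_cat_nat (n := (j * n)%N)) ?leq_addr //.
congr (_ * _).
have := @big_addn _ 1 *%R 0 (j * n + n) (j * n) xpredT G'.
rewrite add0n => ->; rewrite addKn big_mkord.
by apply: eq_bigr => a _; rewrite addnC.
Qed.

Lemma reindex_prod (m n j : nat) (G : 'I_(m * n) -> R) : (j <= m)%N ->
  \prod_(i < m | (i < j)%N) \prod_(a < n | (a < n)%N) G (blk i a) =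
  \prod_(b < m * n | (b < j * n)%N) G b.
Proof.
move=> jm; pose G' b := oapp G 1 (insub b).
have E : forall (i : 'I_m) (a : 'I_n), G (blk i a) = G' (i * n + a)%N.
  move=> i a; rewrite /G'; case: insubP => /= [u _ hu | hn].
    by congr G; apply: val_inj; rewrite /= hu.
  by rewrite blk_proof in hn.
transitivity (\prod_(i < m | (i < j)%N) \prod_(a < n) G' (i * n + a)%N).
  apply: eq_bigr => i _; rewrite big_mkcond /=; apply: eq_bigr => a _.
  by rewrite ltn_ord E.
rewrite -(big_ord_widen _ (fun i => \prod_(a < n) G' (i * n + a)%N) jm).
rewrite -(big_mkord xpredT (fun i => \prod_(a < n) G' (i * n + a)%N)) nat_block big_mkord.
have jn : (j * n <= m * n)%N by rewrite leq_mul2r jm orbT.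
rewrite (big_ord_widen _ G' jn); apply: eq_bigr => b _.
by rewrite /G' valK.
Qed.
End Reindex.

Section Main.
Variables (F : fieldType) (q : F) (n m k : nat).
Hypotheses (hF : 2 \notin [pchar F]) (hq : q != 0) (hn : (0 < n)%N) (hm : (0 < m)%N) (hk : (0 < k)%N).
Variables (A : algType F) (psiA psisA omA omiA : 'I_n -> A).
Hypothesis hA : is_Clq q k psiA psisA omA omiA.
Variables (B : algType F) (psiB psisB omB omiB : 'I_(m * n) -> B).
Hypothesis hB : is_Clq q k psiB psisB omB omiB.
Variables (T : algType F) (iota : 'I_m -> {lrmorphism A -> T}).
Hypothesis hT : is_tensor_power iota.

Lemma h2 : (2:F) != 0.
Proof. by apply/negP => h; move: hF; rewrite inE /= h. Qed.
Let relA := hA.1.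
Let relB := hB.1.
Let h2' := h2.

Lemma blk_div (j : 'I_m) (a : 'I_n) : (blk j a %/ n)%N = j.
Proof. by rewrite /= divnMDl // divn_small // addn0. Qed.
Lemma blk_mod (j : 'I_m) (a : 'I_n) : (blk j a %% n)%N = a.
Proof. by rewrite /= modnMDl modn_small. Qed.
Lemma blk_eq (j1 j2 : 'I_m) (a1 a2 : 'I_n) : (blk j1 a1 == blk j2 a2) = (j1 == j2) && (a1 == a2).
Proof.
apply/eqP/andP => [e|[/eqP -> /eqP ->] //]; split; apply/eqP/val_inj.
  by rewrite /= -(blk_div j1 a1) -(blk_div j2 a2) e.
by rewrite /= -(blk_mod j1 a1) -(blk_mod j2 a2) e.
Qed.
Lemma blk_inj (j : 'I_m) : injective (@blk n m j).
Proof. by move=> a1 a2 /eqP; rewrite blk_eq eqxx => /eqP. Qed.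

Lemma bj_proof (b : 'I_(m * n)) : (b %/ n < m)%N.
Proof. by rewrite ltn_divLR // ltn_ord. Qed.
Definition bj (b : 'I_(m * n)) : 'I_m := Ordinal (bj_proof b).
Definition ba (b : 'I_(m * n)) : 'I_n := Ordinal (ltn_pmod b hn).
Lemma blk_bj_ba b : blk (bj b) (ba b) = b.
Proof. by apply: val_inj; rewrite /= -divn_eq. Qed.
Lemma bj_blk (j : 'I_m) (a : 'I_n) : bj (blk j a) = j. Proof. by apply: val_inj; apply: blk_div. Qed.
Lemma ba_blk (j : 'I_m) (a : 'I_n) : ba (blk j a) = a. Proof. by apply: val_inj; apply: blk_mod. Qed.
Lemma blk_ge (j : 'I_m) (a : 'I_n) : (j * n <= blk j a)%N. Proof. by rewrite /= leq_addr. Qed.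
Lemma blk_lt (j : 'I_m) (a : 'I_n) (j' : nat) : (j < j')%N -> (blk j a < j' * n)%N.
Proof. by move=> jj; have := ltn_ord a; rewrite /=; nia. Qed.

Definition FB (j : nat) := fcomm psiB psisB (j * n).
Lemma FB_sq j : FB j * FB j = 1. Proof. exact: (fc_sq relB). Qed.
Lemma FB_phi (j : 'I_m) s a : GRing.comm (FB j) (clq_phi psiB psisB s (blk j a)).
Proof. apply: commr_sym; apply: (fc_phi relB) => //; exact: blk_ge. Qed.

Lemma relg (j : 'I_m) : Clq_rel q k (fun a => FB j * psiB (blk j a)) (fun a => FB j * psisB (blk j a))
  (fun a => omB (blk j a)) (fun a => omiB (blk j a)).
Proof.
apply: (rel_twist (rel_comp (@blk_inj j) relB)); first exact: FB_sq.
- by move=> a; apply: (FB_phi j true).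
- by move=> a; apply: (FB_phi j false).
- by move=> a; apply: commr_sym; apply: (fc_om relB).
Qed.

Definition g (j : 'I_m) : {lrmorphism A -> B} := sval (clq_ex hA (relg j)).
Lemma gE j a : [/\ g j (psiA a) = FB j * psiB (blk j a), g j (psisA a) = FB j * psisB (blk j a),
  g j (omA a) = omB (blk j a) & g j (omiA a) = omiB (blk j a)].
Proof. exact: (svalP (clq_ex hA (relg j)) a). Qed.
Lemma g_phi j s a : g j (clq_phi psiA psisA s a) = FB j * clq_phi psiB psisB s (blk j a).
Proof. by case: s; case: (gE j a). Qed.
Lemma g_om j a : g j (omA a) = omB (blk j a). Proof. by case: (gE j a). Qed.
Lemma g_omi j a : g j (omiA a) = omiB (blk j a). Proof. by case: (gE j a). Qed.

Lemma L1lt (i j : 'I_m) s t a b : (i < j)%N ->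
  GRing.comm (FB i * clq_phi psiB psisB s (blk i a)) (FB j * clq_phi psiB psisB t (blk j b)).
Proof.
move=> ij; apply: anti_block.
- by apply: (fc_phi_anti relB) => //; apply: blk_lt.
- by apply: (fc_phi relB); apply: (leq_trans _ (blk_ge j b)); rewrite leq_mul2r ltnW ?orbT.
- exact: (fc_fc relB).
- apply: (phi_anti relB); rewrite blk_eq negb_and; apply/orP; left.
  by rewrite neq_ltn ij.
Qed.
Lemma L1 (i j : 'I_m) s t a b : i != j ->
  GRing.comm (FB i * clq_phi psiB psisB s (blk i a)) (FB j * clq_phi psiB psisB t (blk j b)).
Proof.
rewrite neq_ltn => /orP [] ij; first exact: L1lt.
by apply: commr_sym; apply: L1lt.
Qed.
Lemma L2 (i j : 'I_m) s a b : i != j ->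
  GRing.comm (omB (blk j b)) (FB i * clq_phi psiB psisB s (blk i a)).
Proof.
move=> ij; apply: commrM; first exact: (fc_om relB).
by apply: (om_phi_ne relB); rewrite blk_eq negb_and eq_sym ij.
Qed.
Lemma L3 (i j : 'I_m) s a b : i != j ->
  GRing.comm (omiB (blk j b)) (FB i * clq_phi psiB psisB s (blk i a)).
Proof.
move=> ij; apply: commrM; first exact: (fc_omi relB).
by apply: (omi_phi_ne relB h2 hq hk); rewrite blk_eq negb_and eq_sym ij.
Qed.

Lemma g_comm_gen (i j : 'I_m) : i != j -> forall x,
  (forall a, GRing.comm (g j (psiA a)) (g i x)) /\ (forall a, GRing.comm (g j (psisA a)) (g i x)) /\
  (forall a, GRing.comm (g j (omA a)) (g i x)) /\ (forall a, GRing.comm (g j (omiA a)) (g i x)).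
Proof.
move=> ij x.
have K : forall w, (forall s a, GRing.comm w (FB i * clq_phi psiB psisB s (blk i a))) ->
    (forall a, GRing.comm w (omB (blk i a))) -> (forall a, GRing.comm w (omiB (blk i a))) ->
    GRing.comm w (g i x).
  move=> w c1 c2 c3; apply: (clq_cent hA) => a.
  - by rewrite (g_phi i true); apply: c1.
  - by rewrite (g_phi i false); apply: c1.
  - by rewrite g_om; apply: c2.
  - by rewrite g_omi; apply: c3.
have ji : j != i by rewrite eq_sym.
split; [|split; [|split]] => a.
- rewrite (g_phi j true); apply: K => [s b|b|b].
  + by apply: L1.
  + by apply: commr_sym; apply: L2.
  + by apply: commr_sym; apply: L3.
- rewrite (g_phi j false); apply: K => [s b|b|b].
  + by apply: L1.
  + by apply: commr_sym; apply: L2.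
  + by apply: commr_sym; apply: L3.
- rewrite g_om; apply: K => [s b|b|b].
  + by apply: L2.
  + exact: (r_omom relB).
  + exact: (om_omi relB).
- rewrite g_omi; apply: K => [s b|b|b].
  + by apply: L3.
  + by apply: commr_sym; apply: (om_omi relB).
  + exact: (omi_omi relB).
Qed.

Lemma g_comm (i j : 'I_m) : i != j -> forall x y, g i x * g j y = g j y * g i x.
Proof.
move=> ij x y; change (GRing.comm (g i x) (g j y)).
apply: (clq_cent hA) => a; apply: commr_sym.
- by case: (g_comm_gen ij x) => ? _; auto.
- by case: (g_comm_gen ij x) => _ [? _]; auto.
- by case: (g_comm_gen ij x) => _ [_ [? _]]; auto.
- by case: (g_comm_gen ij x) => _ [_ [_ ?]]; auto.
Qed.

Definition fA := fcomm psiA psisA n.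
Lemma io_comm (j : 'I_m) x y : GRing.comm x y -> GRing.comm (iota j x) (iota j y).
Proof. by move=> h; rewrite /GRing.comm -!lrM h. Qed.
Lemma io_ne (i j : 'I_m) x y : i != j -> GRing.comm (iota i x) (iota j y).
Proof. by move=> ij; apply: hT.1. Qed.
Lemma io_fA_sq (i : 'I_m) : iota i fA * iota i fA = 1.
Proof. rewrite -lrM (fc_sq relA) //; exact: rmorph1. Qed.
Lemma io_fA_comm (i i' : 'I_m) : GRing.comm (iota i fA) (iota i' fA).
Proof. by case: (eqVneq i i') => [->|ii]; [exact: commr_refl | exact: io_ne]. Qed.

Definition PT (j : nat) := \prod_(i < m | (i < j)%N) iota i fA.
Lemma PT_sq j : PT j * PT j = 1.
Proof. by apply: prod_invol; [exact: io_fA_comm | exact: io_fA_sq]. Qed.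
Lemma PT_comm j j' : GRing.comm (PT j) (PT j').
Proof. by apply: commr_prod => i _; apply: commr_sym; apply: commr_prod => i' _; apply: io_fA_comm. Qed.
Lemma T1 (j : 'I_m) (j' : nat) x : (j' <= j)%N -> GRing.comm (iota j x) (PT j').
Proof.
move=> jj; apply: commr_prod => i ij; apply: io_ne.
by rewrite neq_ltn (leq_trans ij jj) orbT.
Qed.
Lemma T2 (j : 'I_m) (j' : nat) s a : (j < j')%N ->
  iota j (clq_phi psiA psisA s a) * PT j' = - (PT j' * iota j (clq_phi psiA psisA s a)).
Proof.
move=> jj; have he : forall i : 'I_m, (i < j')%N ->
    iota j (clq_phi psiA psisA s a) * iota i fA =
    (if i == j then -1 else 1 : F) *: (iota i fA * iota j (clq_phi psiA psisA s a)).
  move=> i _; case: (eqVneq i j) => [->|ij].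
    by rewrite -!lrM (fc_phi_anti relA) // lrN lrM scaleN1r.
  by rewrite scale1r; apply: io_ne; rewrite eq_sym.
by rewrite /PT (prod_sign _ he) sign_prod // scaleN1r.
Qed.
Lemma T5 (j : 'I_m) a (j' : nat) : GRing.comm (iota j (omA a)) (PT j').
Proof.
apply: commr_prod => i _; case: (eqVneq j i) => [->|ji]; last exact: io_ne.
by apply: io_comm; apply: (fc_om relA).
Qed.
Lemma T5i (j : 'I_m) a (j' : nat) : GRing.comm (iota j (omiA a)) (PT j').
Proof.
apply: commr_prod => i _; case: (eqVneq j i) => [->|ji]; last exact: io_ne.
by apply: io_comm; apply: (fc_omi relA).
Qed.

Definition Tphi (j : 'I_m) s a := PT j * iota j (clq_phi psiA psisA s a).
Lemma Tsame (j : 'I_m) s1 a1 s2 a2 :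
  Tphi j s1 a1 * Tphi j s2 a2 = iota j (clq_phi psiA psisA s1 a1 * clq_phi psiA psisA s2 a2).
Proof. by rewrite /Tphi twist_mul ?lrM //; [exact: PT_sq | apply: commr_sym; apply: T1]. Qed.
Lemma Tdiff_lt (j1 j2 : 'I_m) s1 a1 s2 a2 : (j1 < j2)%N ->
  Tphi j1 s1 a1 * Tphi j2 s2 a2 + Tphi j2 s2 a2 * Tphi j1 s1 a1 = 0.
Proof.
move=> jj; rewrite /Tphi anti_block2 ?addNr //.
- exact: T2.
- by apply: T1; apply: ltnW.
- exact: PT_comm.
- by apply: io_ne; rewrite neq_ltn jj.
Qed.
Lemma Tdiff (j1 j2 : 'I_m) s1 a1 s2 a2 : j1 != j2 ->
  Tphi j1 s1 a1 * Tphi j2 s2 a2 + Tphi j2 s2 a2 * Tphi j1 s1 a1 = 0.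
Proof.
rewrite neq_ltn => /orP [] jj; first exact: Tdiff_lt.
by rewrite addrC; apply: Tdiff_lt.
Qed.

Lemma om_P (x w P : T) : GRing.comm w P -> w * (P * x) = P * (w * x).
Proof. by move=> h; rewrite mulrA h mulrA. Qed.

Definition psiT b := Tphi (bj b) true (ba b).
Definition psisT b := Tphi (bj b) false (ba b).
Definition omT b := iota (bj b) (omA (ba b)).
Definition omiT b := iota (bj b) (omiA (ba b)).

Lemma relT : Clq_rel q k psiT psisT omT omiT.
Proof.
move=> b1 b2.
have E : (b1 == b2) = (bj b1 == bj b2) && (ba b1 == ba b2) by rewrite -blk_eq !blk_bj_ba.
rewrite E /psiT /psisT /omT /omiT.
move: (bj b1) (ba b1) (bj b2) (ba b2) => j1 a1 j2 a2.
have R2 : iota j1 (omA a1) * iota j1 (omiA a1) = 1 by rewrite -lrM (r_omomi relA) lr1.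
have R7 : Tphi j1 true a1 * Tphi j1 false a1 + q ^+ k *: (Tphi j1 false a1 * Tphi j1 true a1) =
    iota j1 (omiA a1) ^+ k by rewrite !Tsame -lrZ -lrD (r_main1 relA) lrX.
have R8 : Tphi j1 true a1 * Tphi j1 false a1 + q ^- k *: (Tphi j1 false a1 * Tphi j1 true a1) =
    iota j1 (omA a1) ^+ k by rewrite !Tsame -lrZ -lrD (r_main2 relA) lrX.
case: (eqVneq j1 j2) => [<-|ne] /=.
- idtac.
  split; first by rewrite -!lrM (r_omom relA).
  split => //.
  split; first by rewrite /Tphi (om_P _ (T5 _ _ _)) -lrM (r_ompsi relA) lrZ lrM -scalerAr mulrA.
  split; first by rewrite /Tphi (om_P _ (T5 _ _ _)) -lrM (r_ompsis relA) lrZ lrM -scalerAr mulrA.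
  split; first by rewrite !Tsame -lrD (r_psipsi relA) lr0.
  split; first by rewrite !Tsame -lrD (r_psispsis relA) lr0.
  do 2! (split => //).
  by move=> aa; rewrite !Tsame -lrD (r_mixed relA) // lr0.
- rewrite !expr0 invr1 !scale1r.
  split; first exact: io_ne.
  split => //.
  split; first by rewrite /Tphi (om_P _ (T5 _ _ _)) (io_ne _ _ ne) mulrA.
  split; first by rewrite /Tphi (om_P _ (T5 _ _ _)) (io_ne _ _ ne) mulrA.
  split; first exact: Tdiff.
  split; first exact: Tdiff.
  do 2! (split => //).
  by move=> _; apply: Tdiff.
Qed.

Definition Ginv0 : {lrmorphism B -> T} := sval (clq_ex hB relT).
Lemma Ginv0E b : [/\ Ginv0 (psiB b) = psiT b, Ginv0 (psisB b) = psisT b,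
  Ginv0 (omB b) = omT b & Ginv0 (omiB b) = omiT b].
Proof. exact: (svalP (clq_ex hB relT) b). Qed.
Lemma Ginv_phi (j : 'I_m) s a : Ginv0 (clq_phi psiB psisB s (blk j a)) = Tphi j s a.
Proof.
case: (Ginv0E (blk j a)) => e1 e2 _ _; case: s => /=; [rewrite e1 | rewrite e2];
  by rewrite /psiT /psisT bj_blk ba_blk.
Qed.
Lemma Ginv_om (j : 'I_m) a : Ginv0 (omB (blk j a)) = iota j (omA a).
Proof. by case: (Ginv0E (blk j a)) => _ _ -> _; rewrite /omT bj_blk ba_blk. Qed.
Lemma Ginv_omi (j : 'I_m) a : Ginv0 (omiB (blk j a)) = iota j (omiA a).
Proof. by case: (Ginv0E (blk j a)) => _ _ _ ->; rewrite /omiT bj_blk ba_blk. Qed.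

Definition ccB (b : 'I_(m * n)) := psiB b * psisB b - psisB b * psiB b.
Definition ccA (a : 'I_n) := psiA a * psisA a - psisA a * psiA a.

Lemma g_cc (i : 'I_m) a : g i (ccA a) = ccB (blk i a).
Proof.
rewrite /ccA lrB !lrM.
have := g_phi i true a; have := g_phi i false a; rewrite /= => -> ->.
have c1 := FB_phi i true a; have c2 := FB_phi i false a; have c3 := FB_sq i.
by rewrite !twist_mul.
Qed.

Lemma Ginv_cc (i : 'I_m) a : Ginv0 (ccB (blk i a)) = iota i (ccA a).
Proof.
rewrite /ccB lrB !lrM.
have := Ginv_phi i true a; have := Ginv_phi i false a; rewrite /= => -> ->.
by rewrite !Tsame -lrB.
Qed.

Lemma io_fA (i : 'I_m) : iota i fA = \prod_(a < n | (a < n)%N) iota i (ccA a).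
Proof. by rewrite /fA lrP. Qed.

Section WithGam.
Variable Gam : {lrmorphism T -> B}.
Hypothesis GamE : forall i x, Gam (iota i x) = g i x.

Lemma Gam_PT (j : 'I_m) : Gam (PT j) = FB j.
Proof.
rewrite /PT lrP /FB /fcomm -(reindex_prod _ (ltnW (ltn_ord j))).
by apply: eq_bigr => i _; rewrite GamE /fA lrP; apply: eq_bigr => a _; rewrite g_cc.
Qed.

Lemma Ginv_FB (j : 'I_m) : Ginv0 (FB j) = PT j.
Proof.
rewrite /FB /fcomm lrP.
rewrite (eq_bigr (fun b => iota (bj b) (ccA (ba b)))); last first.
  by move=> b _; rewrite -[b in LHS]blk_bj_ba Ginv_cc.
rewrite -(reindex_prod _ (ltnW (ltn_ord j))) /PT.
by apply: eq_bigr => i _; rewrite io_fA; apply: eq_bigr => a _; rewrite bj_blk ba_blk.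
Qed.

Lemma Gam_spec : Gamma_spec iota psiA psisA omA omiA psiB psisB omB omiB Gam.
Proof. by split => j a *; rewrite GamE ?g_phi ?g_om. Qed.

Lemma Gam_uniq (g' : {lrmorphism T -> B}) :
  Gamma_spec iota psiA psisA omA omiA psiB psisB omB omiB g' -> g' =1 Gam.
Proof.
move=> [S1 S2]; apply: (tens_uniq hT) => i.
apply: (clq_uniq hA (h1 := g' \o iota i) (h2 := Gam \o iota i)) => a /=.
- by rewrite GamE (g_phi i true) -(S1 i a true).
- by rewrite GamE (g_phi i false) -(S1 i a false).
- by rewrite GamE g_om S2.
rewrite GamE g_omi -[LHS]mulr1 -(r_omomi relB (blk i a)) mulrA -S2 -lrM -lrM.
by rewrite (omiK relA) // !rmorph1 mul1r.
Qed.

Lemma GinvK : cancel Gam Ginv0.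
Proof.
move=> x; have := tens_uniq hT (h1 := Ginv0 \o Gam) (h2 := idfun); apply => //= i.
apply: (clq_uniq hA (h1 := Ginv0 \o (Gam \o iota i)) (h2 := iota i)) => a /=.
- by rewrite GamE (g_phi i true) lrM Ginv_FB Ginv_phi /Tphi mulrA PT_sq mul1r.
- by rewrite GamE (g_phi i false) lrM Ginv_FB Ginv_phi /Tphi mulrA PT_sq mul1r.
- by rewrite GamE g_om Ginv_om.
- by rewrite GamE g_omi Ginv_omi.
Qed.

Lemma GamK : cancel Ginv0 Gam.
Proof.
move=> x; have := clq_uniq hB (h1 := Gam \o Ginv0) (h2 := idfun); apply => //= b;
  rewrite -[b]blk_bj_ba; move: (bj b) (ba b) => j a.
- by rewrite (Ginv_phi j true) /Tphi lrM Gam_PT GamE (g_phi j true) mulrA FB_sq mul1r.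
- by rewrite (Ginv_phi j false) /Tphi lrM Gam_PT GamE (g_phi j false) mulrA FB_sq mul1r.
- by rewrite Ginv_om GamE g_om.
- by rewrite Ginv_omi GamE g_omi.
Qed.

Notation hB' := (homog (clq_ev psiB psisB omB omiB) (@clq_deg (m * n))).
Notation hT' := (homog (tensor_ev iota psiA psisA omA omiA) (@tensor_deg n m)).

Lemma homog_ccB b : hB' 0 (ccB b).
Proof.
rewrite /ccB; apply: homogB.
- apply: (homog_eq (addrN (clq_deg (Psi b)))); apply: homogM; exact: (homog_gen _ _ (Psi b)) || exact: (homog_gen _ _ (Psis b)).
- apply: (homog_eq (addNr (clq_deg (Psi b)))); apply: homogM; exact: (homog_gen _ _ (Psi b)) || exact: (homog_gen _ _ (Psis b)).
Qed.

Lemma homog_FB j : hB' 0 (FB j).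
Proof. by apply: homog_prod0 => b _; apply: homog_ccB. Qed.

Lemma homog_ioccA (i : 'I_m) a : hT' 0 (iota i (ccA a)).
Proof.
rewrite /ccA lrB !lrM; apply: homogB.
- apply: (homog_eq (addrN (tensor_deg (i, Psi a)))); apply: homogM;
    exact: (homog_gen _ _ (i, Psi a)) || exact: (homog_gen _ _ (i, Psis a)).
- apply: (homog_eq (addNr (tensor_deg (i, Psi a)))); apply: homogM;
    exact: (homog_gen _ _ (i, Psi a)) || exact: (homog_gen _ _ (i, Psis a)).
Qed.

Lemma homog_PT j : hT' 0 (PT j).
Proof.
apply: homog_prod0 => i _; rewrite io_fA; apply: homog_prod0 => a _; exact: homog_ioccA.
Qed.

Lemma homog_Gam d x : hT' d x -> hB' d (Gam x).
Proof.
apply: homog_morph => -[j [a|a|a|a]]; rewrite /tensor_ev /tensor_deg /= GamE.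
- rewrite (g_phi j true); apply: (homog_eq (add0r _)); apply: homogM; first exact: homog_FB.
  exact: (homog_gen _ _ (Psi (blk j a))).
- rewrite (g_phi j false); apply: (homog_eq (add0r _)); apply: homogM; first exact: homog_FB.
  exact: (homog_gen _ _ (Psis (blk j a))).
- by rewrite g_om; exact: (homog_gen _ _ (Om (blk j a))).
- by rewrite g_omi; exact: (homog_gen _ _ (Omi (blk j a))).
Qed.

Lemma homog_Ginv d y : hB' d y -> hT' d (Ginv0 y).
Proof.
apply: homog_morph => -[b|b|b|b]; rewrite /clq_ev -[b]blk_bj_ba; move: (bj b) (ba b) => j a.
- rewrite (Ginv_phi j true); apply: (homog_eq (add0r _)); apply: homogM; first exact: homog_PT.
  exact: (homog_gen _ _ (j, Psi a)).
- rewrite (Ginv_phi j false); apply: (homog_eq (add0r _)); apply: homogM; first exact: homog_PT.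
  exact: (homog_gen _ _ (j, Psis a)).
- by rewrite Ginv_om; exact: (homog_gen _ _ (j, Om a)).
- by rewrite Ginv_omi; exact: (homog_gen _ _ (j, Omi a)).
Qed.

Lemma main_lemma :
  exists (Gam : {lrmorphism T -> B}) (Ginv : {lrmorphism B -> T}),
    Gamma_spec iota psiA psisA omA omiA psiB psisB omB omiB Gam /\
        (forall g : {lrmorphism T -> B},
           Gamma_spec iota psiA psisA omA omiA psiB psisB omB omiB g -> g =1 Gam) /\
        cancel Gam Ginv /\ cancel Ginv Gam /\
        (forall (d : {ffun 'I_(m * n) -> int}) (x : T),
           homog (tensor_ev iota psiA psisA omA omiA) (@tensor_deg n m) d x <->
           homog (clq_ev psiB psisB omB omiB) (@clq_deg (m * n)) d (Gam x)) /\
        (forall (j : 'I_m) (a : 'I_n) (s : bool),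
           Ginv (clq_phi psiB psisB s (blk j a)) =
           (\prod_(i < m | (i < j)%N) iota i (fcomm psiA psisA n)) * iota j (clq_phi psiA psisA s a)) /\
        (forall (j : 'I_m) (a : 'I_n), Ginv (omB (blk j a)) = iota j (omA a)) /\
        (forall (j : 'I_m) (a b : 'I_n) (s t : bool),
           Gam (iota j (clq_phi psiA psisA s a * clq_phi psiA psisA t b)) =
           clq_phi psiB psisB s (blk j a) * clq_phi psiB psisB t (blk j b)).
Proof.
exists Gam, Ginv0; split; first exact: Gam_spec.
split; first exact: Gam_uniq.
split; first exact: GinvK.
split; first exact: GamK.
split.
  move=> d x; split; first exact: homog_Gam.
  by move=> H; rewrite -(GinvK x); apply: homog_Ginv.
split; first by move=> j a s; rewrite Ginv_phi.
split; first by move=> j a; rewrite Ginv_om.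
move=> j a b s t; rewrite GamE lrM !g_phi twist_mul //; first exact: FB_sq.
exact: FB_phi.
Qed.
End WithGam.

Lemma main_lemma2 :
  exists (Gam : {lrmorphism T -> B}) (Ginv : {lrmorphism B -> T}),
    Gamma_spec iota psiA psisA omA omiA psiB psisB omB omiB Gam /\
        (forall g : {lrmorphism T -> B},
           Gamma_spec iota psiA psisA omA omiA psiB psisB omB omiB g -> g =1 Gam) /\
        cancel Gam Ginv /\ cancel Ginv Gam /\
        (forall (d : {ffun 'I_(m * n) -> int}) (x : T),
           homog (tensor_ev iota psiA psisA omA omiA) (@tensor_deg n m) d x <->
           homog (clq_ev psiB psisB omB omiB) (@clq_deg (m * n)) d (Gam x)) /\
        (forall (j : 'I_m) (a : 'I_n) (s : bool),
           Ginv (clq_phi psiB psisB s (blk j a)) =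
           (\prod_(i < m | (i < j)%N) iota i (fcomm psiA psisA n)) * iota j (clq_phi psiA psisA s a)) /\
        (forall (j : 'I_m) (a : 'I_n), Ginv (omB (blk j a)) = iota j (omA a)) /\
        (forall (j : 'I_m) (a b : 'I_n) (s t : bool),
           Gam (iota j (clq_phi psiA psisA s a * clq_phi psiA psisA t b)) =
           clq_phi psiB psisB s (blk j a) * clq_phi psiB psisB t (blk j b)).
Proof.
have [Gam [GamE _]] := hT.2 B g g_comm.
exact: (main_lemma GamE).
Qed.
End Main.

Unset Implicit Arguments.

Theorem theorem3p10 (F : fieldType) (q : F) (n m k : nat)
  (hF : 2 \notin [pchar F]) (hq : q != 0)
  (hn : (0 < n)%N) (hm : (0 < m)%N) (hk : (0 < k)%N)
  (A : algType F) (psiA psisA omA omiA : 'I_n -> A)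
  (hA : is_Clq q k psiA psisA omA omiA)
  (B : algType F) (psiB psisB omB omiB : 'I_(m * n) -> B)
  (hB : is_Clq q k psiB psisB omB omiB)
  (T : algType F) (iota : 'I_m -> {lrmorphism A -> T})
  (hT : is_tensor_power iota) :
  exists (Gam : {lrmorphism T -> B}) (Ginv : {lrmorphism B -> T}),
    Gamma_spec iota psiA psisA omA omiA psiB psisB omB omiB Gam /\
        (forall g : {lrmorphism T -> B},
           Gamma_spec iota psiA psisA omA omiA psiB psisB omB omiB g -> g =1 Gam) /\
        cancel Gam Ginv /\ cancel Ginv Gam /\
        (forall (d : {ffun 'I_(m * n) -> int}) (x : T),
           homog (tensor_ev iota psiA psisA omA omiA) (@tensor_deg n m) d x <->
           homog (clq_ev psiB psisB omB omiB) (@clq_deg (m * n)) d (Gam x)) /\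
        (forall (j : 'I_m) (a : 'I_n) (s : bool),
           Ginv (clq_phi psiB psisB s (blk j a)) =
           (\prod_(i < m | (i < j)%N) iota i (fcomm psiA psisA n)) * iota j (clq_phi psiA psisA s a)) /\
        (forall (j : 'I_m) (a : 'I_n), Ginv (omB (blk j a)) = iota j (omA a)) /\
        (forall (j : 'I_m) (a b : 'I_n) (s t : bool),
           Gam (iota j (clq_phi psiA psisA s a * clq_phi psiA psisA t b)) =
           clq_phi psiB psisB s (blk j a) * clq_phi psiB psisB t (blk j b)).
Proof.
exact: (main_lemma2 hF hq hn hm hk hA hB hT).
Qed.
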